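(* Let $I$ be a proper ideal in $\mathbb{B}_n$, let $Z=(z_1,\dots,z_s)$ be a tuple of distinct Boolean indeterminates, let $m=n-s$, and let $\mathbb{B}_m\subseteq\mathbb{B}_n$ be the subring $\mathbb{F}_2[X\setminus Z]$ generated by the Boolean indeterminates not in $Z$. Assume $F=(f_1,\dots,f_s)$ is a coherently $Z$-separating tuple of Boolean polynomials in $I$ with respect to a term ordering $\sigma$ (i.e. $\operatorname{LT}_\sigma(f_i)=z_i$), and write $f_i=z_i-h_i$ with $h_i\in\mathbb{B}_m$. (a) The reduced Boolean $\sigma$-Gröbner basis of $I$ has the form $\{z_1-\tilde h_1,\dots,z_s-\tilde h_s,g_1,\dots,g_r\}$ with $\tilde h_1,\dots,\tilde h_s,g_1,\dots,g_r\in\mathbb{B}_m$. (b) The $\mathbb{F}_2$-algebra homomorphism $\Phi:\mathbb{B}_n/I\to\mathbb{B}_m/(I\cap\mathbb{B}_m)$ given by $\Phi(x_i+I)=x_i+(I\cap\mathbb{B}_m)$ for $x_i\notin Z$ and $\Phi(x_i+I)=h_j+(I\cap\mathbb{B}_m)$ for $x_i=z_j\in Z$ is well defined and is an isomorphism of $\mathbb{F}_2$-algebras. (c) For every elimination ordering $\tau$ for $Z$, we have $\langle z_1,\dots,z_s\rangle\subseteq\operatorname{LT}_\tau(I)$.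
   Context: $P=\mathbb{F}_2[X_1,\dots,X_n]$, $\mathbb{I}_n=\langle X_1^2-X_1,\dots,X_n^2-X_n\rangle$, $\mathbb{B}_n=P/\mathbb{I}_n$, $x_i=X_i+\mathbb{I}_n$, $X=(x_1,\dots,x_n)$. Every $f\in\mathbb{B}_n$ has a unique representative $F\in P$ that is a sum of square-free terms (canonical representative); $\operatorname{Supp}(f)=\{t+\mathbb{I}_n: t\in\operatorname{Supp}(F)\}$; for a term ordering $\sigma$ on $P$, $\operatorname{LT}_\sigma(f)=\operatorname{LT}_\sigma(F)+\mathbb{I}_n$ and $\operatorname{LT}_\sigma(I)=\langle\operatorname{LT}_\sigma(f): f\in I\rangle$. A Boolean $\sigma$-Gröbner basis of $I$ is a finite $G\subseteq I$ with $\langle\operatorname{LT}_\sigma(g):g\in G\rangle=\operatorname{LT}_\sigma(I)$; it is reduced if it is minimal, and for each $g\in G$ no term of $\operatorname{Supp}(g)$ other than $\operatorname{LT}_\sigma(g)$ lies in $\operatorname{LT}_\sigma(I)$ (over $\mathbb{F}_2$ all elements are monic). A tuple $(f_1,\dots,f_s)$ of Boolean polynomials in $I$ is $Z$-separating if there is a term ordering $\sigma$ with $\operatorname{LT}_\sigma(f_i)=z_i$ for all $i$; it is coherently $Z$-separating if moreover, for all $i\ne j$, no term in $\operatorname{Supp}(f_i)$ is divisible by $z_j$. An elimination ordering for $Z$ is a term ordering in which every term divisible by some $z_i$ is larger than every term not divisible by any $z_i$. *)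

(* Defs.v *)
(* Boolean polynomials in B_n = F_2[x_1..x_n]/<x_i^2-x_i>
   are represented by their support (= set of square-free terms of the
   canonical representative); a square-free term is the set of its
   indeterminates. *)
From mathcomp Require Import all_boot.
Set Implicit Arguments. Unset Strict Implicit. Unset Printing Implicit Defensive.

Section Boolean.
Variable n : nat.

Definition bterm := {set 'I_n}.
Definition bpoly := {set bterm}.

Definition bzero : bpoly := set0.
Definition bone : bpoly := [set set0].
Definition bvar (i : 'I_n) : bpoly := [set [set i]].
(* addition over F_2 = symmetric difference of supports (also subtraction) *)
Definition badd (f g : bpoly) : bpoly := (f :\: g) :|: (g :\: f).
(* multiplication: x_i^2 = x_i, so term product is union; the coefficient
   of w is the parity of the number of pairs of terms with product w *)
Definition bmul (f g : bpoly) : bpoly :=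
  [set w : bterm | odd #|[set p : bterm * bterm |
        [&& p.1 \in f, p.2 \in g & p.1 :|: p.2 == w]]|].

Definition bsubst (a : 'I_n -> bpoly) (f : bpoly) : bpoly :=
  foldr badd bzero
    [seq foldr bmul bone [seq a i | i : 'I_n <- enum t] | t : bterm <- enum f].

Definition is_ideal (I : {set bpoly}) : Prop :=
  [/\ bzero \in I,
      (forall f g, f \in I -> g \in I -> badd f g \in I) &
      (forall f g, g \in I -> bmul f g \in I)].

Definition proper_ideal (I : {set bpoly}) : Prop := is_ideal I /\ bone \notin I.

Definition in_gen (S : {set bpoly}) (f : bpoly) : Prop :=
  forall J : {set bpoly}, is_ideal J -> S \subset J -> f \in J.

(* terms of P = F_2[X_1..X_n] as exponent vectors *)
Definition expv := {ffun 'I_n -> nat}.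
Definition ev0 : expv := [ffun => 0%N].
Definition evadd (a b : expv) : expv := [ffun i => (a i + b i)%N].
Definition ev (t : bterm) : expv := [ffun i => nat_of_bool (i \in t)].

Definition is_term_ordering (le : rel expv) : Prop :=
  [/\ reflexive le, antisymmetric le, transitive le & total le] /\
  (forall a b c, le a b -> le (evadd a c) (evadd b c)) /\
  (forall a, le ev0 a).

Definition isLT (le : rel expv) (f : bpoly) (t : bterm) : bool :=
  (t \in f) && [forall u in f, le (ev u) (ev t)].

Definition LTs (le : rel expv) (S : {set bpoly}) : {set bpoly} :=
  [set [set t] | t in [set t : bterm | [exists f in S, isLT le f t]]].

Definition inLT (le : rel expv) (I : {set bpoly}) (g : bpoly) : Prop :=
  in_gen (LTs le I) g.

Definition is_GB (le : rel expv) (I G : {set bpoly}) : Prop :=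
  [/\ G \subset I, bzero \notin G &
      forall g, in_gen (LTs le G) g <-> inLT le I g].

Definition is_reduced_GB (le : rel expv) (I G : {set bpoly}) : Prop :=
  [/\ is_GB le I G,
      (forall g t, g \in G -> isLT le g t -> ~ in_gen (LTs le (G :\ g)) [set t]) &
      (forall g t u, g \in G -> isLT le g t -> u \in g -> u != t ->
          ~ inLT le I [set u])].

Definition inBm (s : nat) (z : 'I_s -> 'I_n) (f : bpoly) : bool :=
  [forall t in f, [forall j, z j \notin t]].

Definition coh_Z_sep (le : rel expv) (I : {set bpoly}) (s : nat)
  (z : 'I_s -> 'I_n) (f : 'I_s -> bpoly) : Prop :=
  [/\ forall i, f i \in I,
      forall i, isLT le (f i) [set z i] &
      forall i j, i != j -> forall t, t \in f i -> z j \notin t].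

Definition is_elim_ordering (s : nat) (z : 'I_s -> 'I_n) (le : rel expv) : Prop :=
  is_term_ordering le /\
  forall a b : expv, (exists j, (0 < a (z j))%N) -> (forall j, b (z j) = 0%N) ->
    le b a && (a != b).

Definition Phi_images (s : nat) (z : 'I_s -> 'I_n) (h : 'I_s -> bpoly)
  (i : 'I_n) : bpoly :=
  match [pick j | z j == i] with Some j => h j | None => bvar i end.

End Boolean.

(* Main.v *)
Require Import Defs.
From mathcomp Require Import all_boot.
Set Implicit Arguments. Unset Strict Implicit. Unset Printing Implicit Defensive.

Section Aux.
Variable n : nat.
Implicit Types (f g p q : bpoly n) (t u w x : bterm n).

Definition beval f x : bool := \big[addb/false]_(t : bterm n) ((t \in f) && (t \subset x)).

Lemma andb_bigX (T : Type) (r : seq T) (P : pred T) b (F : T -> bool) :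
  b && \big[addb/false]_(t <- r | P t) F t = \big[addb/false]_(t <- r | P t) (b && F t).
Proof. by case: b => //=; rewrite big1. Qed.

Lemma in_badd f g t : (t \in badd f g) = (t \in f) (+) (t \in g).
Proof. by rewrite /badd !inE; case: (t \in f); case: (t \in g). Qed.

Lemma beval_add f g x : beval (badd f g) x = beval f x (+) beval g x.
Proof.
rewrite /beval -big_split /=; apply: eq_bigr => t _.
by rewrite in_badd; case: (t \in f); case: (t \in g); case: (t \subset x).
Qed.

Lemma odd_card_big (A : {set bterm n * bterm n}) :
  odd #|A| = \big[addb/false]_(p : bterm n * bterm n) (p \in A).
Proof.
rewrite -sum1_card (big_morph odd oddD (erefl (odd 0))) big_mkcond /=.
by apply: eq_bigr => p _; case: (p \in A).
Qed.

Lemma beval_mul f g x : beval (bmul f g) x = beval f x && beval g x.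
Proof.
rewrite /beval /bmul.
under eq_bigr => w _ do rewrite inE odd_card_big andbC andb_bigX.
rewrite exchange_big /=.
transitivity (\big[addb/false]_(p : bterm n * bterm n)
   (((p.1 \in f) && (p.1 \subset x)) && ((p.2 \in g) && (p.2 \subset x)))).
  apply: eq_bigr => p _.
  rewrite (bigD1 (p.1 :|: p.2)) //= big1 ?addbF.
    rewrite inE eqxx andbT subUset.
    by case: (p.1 \in f); case: (p.2 \in g); case: (p.1 \subset x); case: (p.2 \subset x).
  move=> w /negbTE wne; rewrite inE.
  by case: eqP => [E|]; [rewrite E eqxx in wne|rewrite !andbF].
rewrite -(pair_big xpredT xpredT (fun a b => ((a \in f) && (a \subset x)) && ((b \in g) && (b \subset x)))) /=.
rewrite [RHS]andbC andb_bigX; apply: eq_bigr => a _.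
rewrite [RHS]andbC andb_bigX; apply: eq_bigr => b _.
by rewrite !andbA.
Qed.

Lemma beval_inj f g : (forall x, beval f x = beval g x) -> f = g.
Proof.
move=> E.
have E0 : forall x, beval (badd f g) x = false.
  by move=> x; rewrite beval_add E addbb.
suff d0 : badd f g = set0.
  apply/setP => t; move/setP: d0 => /(_ t); rewrite in_badd inE.
  by case: (t \in f); case: (t \in g).
apply/eqP; apply/negPn/negP => /set0Pn [t0 t0in].
case: (arg_minnP (fun t => #|t|) t0in) => t tin tmin.
have tin' : t \in badd f g := tin.
have := E0 t; rewrite /beval (bigD1 t) //= tin' subxx /= big1 //.
move=> u ut; apply/negbTE/negP => /andP [ud' usub].
have := tmin u ud'; move=> le.
have : u == t by rewrite eqEcard usub le.
by rewrite (negbTE ut).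
Qed.

Lemma beval_mono t x : beval [set t] x = (t \subset x).
Proof.
rewrite /beval (bigD1 t) ?inE ?eqxx //= big1 ?addbF //.
by move=> u /negbTE; rewrite inE => ->.
Qed.

Lemma beval0 x : beval (bzero n) x = false.
Proof. by rewrite /beval big1 // => t _; rewrite inE. Qed.

Lemma beval1 x : beval (bone n) x = true.
Proof. by rewrite /bone beval_mono sub0set. Qed.

Lemma beval_var i x : beval (bvar i) x = (i \in x).
Proof. by rewrite /bvar beval_mono sub1set. Qed.


Lemma beval_fmul (l : seq (bpoly n)) x :
  beval (foldr (@bmul n) (bone n) l) x = all (fun q => beval q x) l.
Proof. by elim: l => [|q l IH] /=; rewrite ?beval1 // beval_mul IH. Qed.

Lemma beval_fadd (l : seq (bpoly n)) x :
  beval (foldr (@badd n) (bzero n) l) x = foldr addb false [seq beval q x | q <- l].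
Proof. by elim: l => [|q l IH] /=; rewrite ?beval0 // beval_add IH. Qed.

Lemma beval_subst a p x : beval (bsubst a p) x = beval p [set i | beval (a i) x].
Proof.
rewrite /bsubst beval_fadd -map_comp foldrE big_map big_enum [RHS]/beval big_mkcond /=.
apply: eq_bigr => t _ /=; rewrite beval_fmul all_map.
case: (t \in p); last by [].
rewrite andTb; apply/allP/subsetP => H i.
  by move=> ti; rewrite inE; apply: H; rewrite mem_enum.
by rewrite mem_enum => ti; have := H i ti; rewrite inE.
Qed.

Lemma bsubst_var p : bsubst (@bvar n) p = p.
Proof.
apply: beval_inj => x; rewrite beval_subst; congr beval.
by apply/setP => i; rewrite inE beval_var.
Qed.

Lemma bsubst_add a p q : bsubst a (badd p q) = badd (bsubst a p) (bsubst a q).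
Proof. by apply: beval_inj => x; rewrite beval_add !beval_subst beval_add. Qed.

Lemma bsubst_mul a p q : bsubst a (bmul p q) = bmul (bsubst a p) (bsubst a q).
Proof. by apply: beval_inj => x; rewrite beval_mul !beval_subst beval_mul. Qed.

Lemma bsubst_one a : bsubst a (bone n) = bone n.
Proof. by apply: beval_inj => x; rewrite beval_subst !beval1. Qed.

Lemma baddK p q : badd p (badd p q) = q.
Proof. by apply: beval_inj => x; rewrite !beval_add addKb. Qed.

Lemma baddC p q : badd p q = badd q p.
Proof. by apply: beval_inj => x; rewrite !beval_add addbC. Qed.

Lemma baddxx p : badd p p = bzero n.
Proof. by apply: beval_inj => x; rewrite !beval_add beval0 addbb. Qed.

Lemma ideal_add4 (I : {set bpoly n}) a b c d : is_ideal I ->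
  badd a c \in I -> badd b d \in I -> badd (badd a b) (badd c d) \in I.
Proof.
move=> [_ Hadd _] H1 H2.
have -> : badd (badd a b) (badd c d) = badd (badd a c) (badd b d).
  apply: beval_inj => x; rewrite !beval_add.
  by case: (beval a x); case: (beval b x); case: (beval c x); case: (beval d x).
exact: Hadd.
Qed.

Lemma ideal_mul4 (I : {set bpoly n}) a b c d : is_ideal I ->
  badd a c \in I -> badd b d \in I -> badd (bmul a b) (bmul c d) \in I.
Proof.
move=> [_ Hadd Hmul] H1 H2.
have -> : badd (bmul a b) (bmul c d) = badd (bmul b (badd a c)) (bmul c (badd b d)).
  apply: beval_inj => x; rewrite !(beval_add, beval_mul).
  by case: (beval a x); case: (beval b x); case: (beval c x); case: (beval d x).
by apply: (Hadd); apply: Hmul.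
Qed.

Lemma ideal_subst (I : {set bpoly n}) a p : is_ideal I ->
  (forall i, badd (bvar i) (a i) \in I) -> badd p (bsubst a p) \in I.
Proof.
move=> HI Ha; rewrite -{1}(bsubst_var p) /bsubst.
elim: (enum p) => [|t l IH] /=; first by rewrite baddxx; case: HI.
apply: ideal_add4 => //.
elim: (enum t) => [|i r IH'] /=; first by rewrite baddxx; case: HI.
exact: ideal_mul4.
Qed.

Lemma in_bmulP p q w : w \in bmul p q -> exists a b, [/\ a \in p, b \in q & w = a :|: b].
Proof.
rewrite inE => /odd_gt0; rewrite card_gt0 => /set0Pn [[a b]].
by rewrite inE /= => /and3P [ap bq /eqP <-]; exists a, b.
Qed.

Section Bm.
Variables (s : nat) (z : 'I_s -> 'I_n).

Lemma inBm0 : inBm z (bzero n).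
Proof. by apply/forallP => t; rewrite inE. Qed.

Lemma inBm1 : inBm z (bone n).
Proof. by apply/forallP => t; apply/implyP; rewrite inE => /eqP ->; apply/forallP => j; rewrite inE. Qed.

Lemma inBm_add p q : inBm z p -> inBm z q -> inBm z (badd p q).
Proof.
move=> /forallP Hp /forallP Hq; apply/forallP => t; apply/implyP.
rewrite in_badd; case Htp: (t \in p) => /=.
  by move=> _; have := Hp t; rewrite Htp.
by move=> Htq; have := Hq t; rewrite Htq.
Qed.

Lemma inBm_mul p q : inBm z p -> inBm z q -> inBm z (bmul p q).
Proof.
move=> /forallP Hp /forallP Hq; apply/forallP => t; apply/implyP.
move=> /in_bmulP [a [b [ap bq ->]]].
have /forallP Ha := implyP (Hp a) ap; have /forallP Hb := implyP (Hq b) bq.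
by apply/forallP => j; rewrite in_setU negb_or Ha Hb.
Qed.

Lemma inBm_subst a p : (forall i, inBm z (a i)) -> inBm z (bsubst a p).
Proof.
move=> Ha; rewrite /bsubst; elim: (enum p) => [|t l IH] /=; first exact: inBm0.
apply: inBm_add => //; elim: (enum t) => [|i r IH'] /=; first exact: inBm1.
exact: inBm_mul.
Qed.

End Bm.


Lemma in_gen_mem (S : {set bpoly n}) g : g \in S -> in_gen S g.
Proof. by move=> gS J _ /subsetP; apply. Qed.

Lemma mono_mul_in (J : {set bpoly n}) zj t : is_ideal J -> [set [set zj]] \in J ->
  zj \in t -> [set t] \in J.
Proof.
case=> _ _ Hm H zt.
have -> : [set t] = bmul [set t] [set [set zj]].
  apply: beval_inj => x; rewrite beval_mul !beval_mono sub1set.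
  apply/idP/idP => [H'|/andP[]//]; by rewrite H' (subsetP H').
exact: Hm.
Qed.

Lemma LT_in_LTs le (G : {set bpoly n}) g t : g \in G -> isLT le g t ->
  [set t] \in LTs le G.
Proof.
move=> gG Ht; apply/imsetP; exists t => //; rewrite inE; apply/existsP; exists g.
by rewrite gG Ht.
Qed.

Lemma in_gen_LT le (G : {set bpoly n}) t : in_gen (LTs le G) [set t] ->
  exists g u, [/\ g \in G, isLT le g u & u \subset t].
Proof.
move=> H.
pose J := [set p : bpoly n | [forall w in p, [exists g in G, exists u, isLT le g u && (u \subset w)]]].
have HJ : is_ideal J.
  split.
  - by rewrite inE; apply/forallP => w; rewrite inE.
  - move=> p q; rewrite !inE => /forallP Hp /forallP Hq; apply/forallP => w.
    apply/implyP; rewrite in_badd; case Hw: (w \in p) => /=.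
      by move=> _; exact: (implyP (Hp w) Hw).
    by move=> Hwq; exact: (implyP (Hq w) Hwq).
  - move=> p q; rewrite !inE => /forallP Hq; apply/forallP => w; apply/implyP.
    move=> /in_bmulP [a [b [ap bq ->]]].
    have /existsP [g /andP [gG /existsP [u /andP [gu ub]]]] := implyP (Hq b) bq.
    apply/existsP; exists g; rewrite gG; apply/existsP; exists u; rewrite gu /=.
    exact: (subset_trans ub (subsetUr _ _)).
have sub : LTs le G \subset J.
  apply/subsetP => p /imsetP [u]; rewrite inE => /existsP [g /andP [gG gu]] ->.
  rewrite inE; apply/forallP => w; apply/implyP; rewrite inE => /eqP ->.
  apply/existsP; exists g; rewrite gG; apply/existsP; exists u; by rewrite gu subxx.
have := H J HJ sub; rewrite inE => /forallP /(_ t); rewrite inE eqxx /=.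
move=> /existsP [g /andP [gG /existsP [u /andP [gu ut]]]].
by exists g, u.
Qed.

Lemma ev_inj : injective (@ev n).
Proof.
move=> u v E; apply/setP => i; move/ffunP: E => /(_ i); rewrite !ffunE.
by case: (i \in u); case: (i \in v).
Qed.

Lemma ev_set0 : ev (set0 : bterm n) = ev0 n.
Proof. by apply/ffunP => i; rewrite !ffunE inE. Qed.

Lemma max_seq (T : eqType) (R : rel T) (s : seq T) : total R -> transitive R ->
  s != [::] -> exists2 x, x \in s & all (fun y => R y x) s.
Proof.
move=> Rt Rtr; elim: s => [//|a s IH] _.
have Raa : R a a by have := Rt a a; rewrite orbb.
case: (altP (s =P [::])) => [->|/IH [x xs Hx]].
  by exists a; rewrite ?inE ?eqxx //= Raa.
case Rax: (R a x).
  exists x; first by rewrite inE xs orbT.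
  by rewrite /= Rax Hx.
have Rxa : R x a by have := Rt a x; rewrite Rax.
exists a; first by rewrite inE eqxx.
rewrite /= Raa /=; apply/allP => y ys; exact: Rtr (allP Hx y ys) Rxa.
Qed.

Lemma exLT le g : is_term_ordering le -> g != bzero n -> exists t, isLT le g t.
Proof.
move=> [[_ _ Htr Ht] _] g0.
have ne : enum g != [::].
  apply/eqP => E; move: g0; rewrite /bzero; case/set0Pn => x.
  by rewrite -mem_enum E.
have [t tg Hall] := @max_seq _ (fun u t => le (ev u) (ev t)) (enum g)
  (fun u v => Ht _ _) (fun u v w => Htr _ _ _) ne.
exists t; rewrite /isLT -mem_enum tg /=; apply/forallP => u; apply/implyP => ug.
by apply: (allP Hall); rewrite mem_enum.
Qed.

Lemma LT0 le g : is_term_ordering le -> isLT le g set0 -> g = bone n.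
Proof.
move=> [[_ Has _ _] [_ H0]] /andP [g0 /forallP Hg].
apply/setP => u; rewrite /bone inE; apply/idP/idP => [ug|/eqP ->//].
have L := implyP (Hg u) ug.
have := H0 (ev u); rewrite -ev_set0 => L'.
by apply/eqP; apply: ev_inj; apply: Has; rewrite L L'.
Qed.


Lemma badd_tr (X Y A B : bpoly n) : badd X Y = badd (badd A X) (badd (badd A B) (badd B Y)).
Proof.
apply: beval_inj => x; rewrite !beval_add.
by case: (beval X x); case: (beval Y x); case: (beval A x); case: (beval B x).
Qed.

End Aux.

Theorem proposition6p2 (n s : nat) (I : {set bpoly n}) (z : 'I_s -> 'I_n)
  (sigma : rel (expv n)) (f h : 'I_s -> bpoly n) :
  proper_ideal I ->
  injective z ->
  is_term_ordering sigma ->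
  coh_Z_sep sigma I z f ->
  (forall i, f i = badd (bvar (z i)) (h i)) ->
  (forall i, inBm z (h i)) ->
  let Phi := bsubst (Phi_images z h) in
  (* (a) *)
  (forall G : {set bpoly n}, is_reduced_GB sigma I G ->
     exists (ht : 'I_s -> bpoly n) (Gs : {set bpoly n}),
       [/\ forall i, inBm z (ht i),
           forall g, g \in Gs -> inBm z g &
           G = [set badd (bvar (z i)) (ht i) | i : 'I_s] :|: Gs]) /\
  (* (b) Phi is a well-defined F_2-algebra isomorphism
         B_n / I -> B_m / (I cap B_m) *)
  ((forall p, inBm z (Phi p)) /\
   (forall p q, Phi (badd p q) = badd (Phi p) (Phi q)) /\
   (forall p q, Phi (bmul p q) = bmul (Phi p) (Phi q)) /\
   Phi (bone n) = bone n /\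
   (forall p q, badd p q \in I -> badd (Phi p) (Phi q) \in I) /\
   (forall p q, badd (Phi p) (Phi q) \in I -> badd p q \in I) /\
   (forall b, inBm z b -> exists p, badd (Phi p) b \in I)) /\
  (* (c) *)
  (forall tau : rel (expv n), is_elim_ordering z tau ->
     forall j, inLT tau I (bvar (z j))).
Proof.
move=> [HI I1] zinj Hsig [fI fLT fcoh] hf hB Phi.
have fI' i : badd (bvar (z i)) (h i) \in I by rewrite -hf.
have zLT i : inLT sigma I (bvar (z i)) := in_gen_mem (LT_in_LTs (fI i) (fLT i)).
have termLT j (u : bterm n) : z j \in u -> inLT sigma I [set u].
  by move=> zu J HJ sub; apply: (mono_mul_in HJ _ zu); apply: (subsetP sub); apply: LT_in_LTs (fI j) (fLT j).
have [_ Hadd _] := HI.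
have Hai i : badd (bvar i) (Phi_images z h i) \in I.
  rewrite /Phi_images; case: pickP => [j /eqP <-|_]; first exact: fI'.
  by rewrite baddxx; case: HI.
have HaB i : inBm z (Phi_images z h i).
  rewrite /Phi_images; case: pickP => [j _|Hn]; first exact: hB.
  apply/forallP => t; apply/implyP; rewrite inE => /eqP ->; apply/forallP => j.
  by rewrite inE Hn.
have key p : badd p (Phi p) \in I := ideal_subst p HI Hai.
split; [|split].
-
  move=> G [[GI G0 Hgen] Hmin Hred].
  have gex i : exists g, (g \in G) && isLT sigma g [set z i].
    have := (Hgen (bvar (z i))).2 (zLT i) => /in_gen_LT [g [u [gG gu]]].
    rewrite subset1 => /orP [/eqP Eu|/eqP Eu]; first by exists g; rewrite gG -Eu gu.
    subst u; have g1 := LT0 Hsig gu.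
    by rewrite -g1 (subsetP GI _ gG) in I1.
  pose gi i := odflt (bzero n) [pick g | (g \in G) && isLT sigma g [set z i]].
  have giP i : (gi i \in G) && isLT sigma (gi i) [set z i].
    rewrite /gi; case: pickP => [g //|H]; have [g Hg] := gex i; by rewrite H in Hg.
  have tail g t u : g \in G -> isLT sigma g t -> u \in g -> u != t -> forall j, z j \notin u.
    move=> gG gt ug ut j; apply/negP => zu; exact: (Hred g t u gG gt ug ut (termLT j u zu)).
  exists (fun i => badd (bvar (z i)) (gi i)), [set g in G | inBm z g]; split.
  + move=> i; have /andP [gG gLT] := giP i; have /andP [zin _] := gLT.
    apply/forallP => t; apply/implyP; rewrite in_badd inE.
    case: eqP => [->|ne] /=; first by rewrite zin.
    move=> tg; apply/forallP => k; apply: (tail _ _ _ gG gLT tg); exact/eqP.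
  + by move=> g; rewrite inE => /andP [].
  + apply/setP => g; rewrite in_setU [in X in _ = _ || X]inE; apply/idP/idP.
    * move=> gG.
      have g0 : g != bzero n by apply/eqP => E; by rewrite -E gG in G0.
      have [t gt] := exLT Hsig g0.
      case: (boolP [exists j, z j \in t]) => [/existsP [j zt]|nz].
      -- have Eg : g = gi j.
           apply/eqP/negPn/negP => ne; apply: (Hmin g t gG gt) => J HJ sub.
           apply: (mono_mul_in HJ _ zt); apply: (subsetP sub).
           have /andP [gjG gjLT] := giP j.
           apply: (LT_in_LTs _ gjLT); by rewrite !inE eq_sym ne gjG.
         apply/orP; left; apply/imsetP; exists j => //=; by rewrite baddK.
      -- apply/orP; right; rewrite gG /=.
         apply/forallP => u; apply/implyP => ug; apply/forallP => k.
         case: (altP (u =P t)) => [->|ne]; last exact: tail gG gt ug ne k.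
         by move: nz; rewrite negb_exists => /forallP /(_ k).
    * case/orP => [/imsetP [j _ ->]|]; first by rewrite /= baddK; case/andP: (giP j).
      by case/andP.
-
  split; first by move=> p; apply: inBm_subst.
  split; first exact: bsubst_add.
  split; first exact: bsubst_mul.
  split; first exact: bsubst_one.
  split.
    move=> p q Hpq; rewrite (badd_tr (Phi p) (Phi q) p q).
    by apply: (Hadd); [exact: key|apply: (Hadd) => //; rewrite baddC; exact: key].
  split.
    move=> p q Hpq; rewrite (badd_tr p q (Phi p) (Phi q)).
    apply: (Hadd); [rewrite baddC; exact: key|apply: (Hadd) => //; rewrite baddC; exact: key].
  by move=> b _; exists b; rewrite baddC; exact: key.
-
  move=> tau [Htau Helim] j; apply: in_gen_mem; apply: (LT_in_LTs (fI j)).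
  have nh : [set z j] \notin h j.
    apply/negP => H; have := implyP (forallP (hB j) _) H => /forallP /(_ j).
    by rewrite inE eqxx.
  rewrite /isLT hf in_badd inE eqxx (negbTE nh) /=.
  apply/forallP => u; apply/implyP; rewrite in_badd inE.
  case: eqP => [->|_] /=; first by move=> _; case: Htau => [[Hr _ _ _] _]; apply: Hr.
  move=> uh; have /forallP Hu := implyP (forallP (hB j) u) uh.
  have H1 : exists k, (0 < ev [set z j] (z k))%N by exists j; rewrite ffunE inE eqxx.
  have H2 : forall k, ev u (z k) = 0%N by move=> k; rewrite ffunE (negbTE (Hu k)).
  by case/andP: (Helim _ _ H1 H2).
Qed.
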